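(* Let $N \ge 2$ and $1 \le M < N$ be integers, and let $K$ be an $N \times N$ real symmetric positive definite matrix. For an index set $\alpha \subset \{1,\dots,N\}$ with $|\alpha| = M$, let $\alpha^c = \{1,\dots,N\}\setminus\alpha$ and define the Schur complement $$K/K_{\alpha\alpha} \;=\; K_{\alpha^c\alpha^c} - K_{\alpha^c\alpha}\,K_{\alpha\alpha}^{-1}\,K_{\alpha\alpha^c},$$ an $(N-M)\times(N-M)$ symmetric positive definite matrix (rows and columns listed in increasing order of the indices in $\alpha^c$). Let $\mathcal{M} = \{K/K_{\alpha\alpha} : \alpha \subset \{1,\dots,N\},\ |\alpha| = M\}$, partially ordered by the Loewner order. Let $\alpha^*$ be an index set of size $M$ that maximizes $\operatorname{Tr}\big((K/K_{\alpha\alpha})^{-1}\big)$ over all index sets $\alpha$ of size $M$, and let $A^* = K/K_{\alpha^*\alpha^*}$. Then there is no $B \in \mathcal{M}$ with $A^* > B$, i.e. there is no $B \in \mathcal{M}$ such that $A^* - B$ is positive semidefinite and $A^* \neq B$.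
   Context: Loewner order on symmetric matrices of the same size: $A \le B$ iff $B - A$ is positive semidefinite; $A < B$ (equivalently $B > A$) means $A \le B$ and $A \ne B$. $K_{\beta\gamma}$ denotes the submatrix of $K$ with rows indexed by $\beta$ and columns indexed by $\gamma$. $\operatorname{Tr}$ denotes the trace. *)

(* Defs.v *)
From HB Require Import structures.
From mathcomp Require Import all_boot all_order all_algebra.
From mathcomp Require Import reals.
Set Implicit Arguments. Unset Strict Implicit. Unset Printing Implicit Defensive.
Import Order.TTheory GRing.Theory Num.Theory.
Local Open Scope ring_scope.

(* Submatrix K_{beta gamma}: rows indexed by the elements of beta, columns by
   the elements of gamma, both listed in increasing order (enum of a set of
   'I_N is increasing). The sizes m, n are meant to be #|beta|, #|gamma|;
   out-of-range entries (never used when the sizes match) are 0. *)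
Definition submx_idx (R : nzRingType) (N : nat) (K : 'M[R]_N)
  (beta gamma : {set 'I_N}) (m n : nat) : 'M[R]_(m, n) :=
  \matrix_(i < m, j < n)
    match onth (enum beta) i, onth (enum gamma) j with
    | Some a, Some b => K a b
    | _, _ => 0
    end.

Definition schur_compl (R : realType) (N M : nat) (K : 'M[R]_N)
  (alpha : {set 'I_N}) : 'M[R]_(N - M) :=
  submx_idx K (~: alpha) (~: alpha) (N - M) (N - M)
  - submx_idx K (~: alpha) alpha (N - M) M
    *m invmx (submx_idx K alpha alpha M M)
    *m submx_idx K alpha (~: alpha) M (N - M).

Definition sym_mx (R : realType) (n : nat) (A : 'M[R]_n) : Prop := A^T = A.

Definition posdef (R : realType) (n : nat) (A : 'M[R]_n) : Prop :=
  sym_mx A /\ forall v : 'rV[R]_n, v != 0 -> 0 < (v *m A *m v^T) 0 0.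

Definition psd (R : realType) (n : nat) (A : 'M[R]_n) : Prop :=
  sym_mx A /\ forall v : 'rV[R]_n, 0 <= (v *m A *m v^T) 0 0.

Definition loewner_le (R : realType) (n : nat) (A B : 'M[R]_n) : Prop :=
  psd (B - A).
Definition loewner_lt (R : realType) (n : nat) (A B : 'M[R]_n) : Prop :=
  loewner_le A B /\ A <> B.

(* Main.v *)
Require Import Defs.
From HB Require Import structures.
From mathcomp Require Import all_boot all_order all_algebra.
From mathcomp Require Import reals lra.
Import Order.TTheory GRing.Theory Num.Theory.
Local Open Scope ring_scope.
Set Implicit Arguments. Unset Strict Implicit. Unset Printing Implicit Defensive.

Lemma posdef_unit (R : realType) n (A : 'M[R]_n) : posdef A -> A \in unitmx.
Proof.
case=> _ hA; rewrite unitmxE unitfE; apply/negP => /det0P [v vn0 vA].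
by have := hA v vn0; rewrite vA mul0mx mxE ltxx.
Qed.

Lemma zmod4 (V : zmodType) (a b c d : V) : a - b + (c - d) = a - d - b + c.
Proof. by rewrite addrA addrAC [a - b - d]addrAC. Qed.

Lemma zmod4b (V : zmodType) (a b c d : V) : a - c - (b - d) = a - b - (c - d).
Proof. by rewrite !opprB !addrA [a - c + d]addrAC [a + d - c - b]addrAC [a + d - b]addrAC. Qed.

Lemma key (R : realType) n (B : 'M[R]_n) (x u : 'rV[R]_n) :
  B \in unitmx -> B^T = B ->
  (x - u *m invmx B) *m B *m (x - u *m invmx B)^T
  = x *m B *m x^T - x *m u^T - u *m x^T + u *m invmx B *m u^T.
Proof.
move=> uB sB.
rewrite linearB /= trmx_mul trmx_inv sB.
rewrite mulmxBl !mulmxBr mulmxKV //.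
rewrite !mulmxBl !mulmxA mulmxK // opprB.
exact: zmod4.
Qed.

Lemma posdef_ge0 (R : realType) n (v : 'rV[R]_n) (A : 'M[R]_n) : posdef A -> 0 <= (v *m A *m v^T) 0 0.
Proof.
case=> _ hA; have [->|vn0] := eqVneq v 0; first by rewrite !mul0mx mxE.
exact/ltW/hA.
Qed.

Lemma inv_anti (R : realType) n (A B : 'M[R]_n) :
  posdef A -> posdef B -> psd (A - B) -> forall u : 'rV[R]_n,
  (u *m invmx A *m u^T) 0 0 <= (u *m invmx B *m u^T) 0 0.
Proof.
move=> pA pB [_ hAB] u.
have uA := posdef_unit pA; have uB := posdef_unit pB.
have sA : A^T = A by case: pA.
have sB : B^T = B by case: pB.
set x := u *m invmx A.
have e1 : x *m u^T = u *m invmx A *m u^T by [].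
have e2 : u *m x^T = u *m invmx A *m u^T by rewrite trmx_mul trmx_inv sA mulmxA.
have e3 : x *m A *m x^T = u *m invmx A *m u^T by rewrite /x mulmxKV // e2.
have := posdef_ge0 (x - u *m invmx B) pB.
rewrite key // e1 e2.
have := hAB x; rewrite mulmxBr mulmxBl e3.
move: (u *m invmx A *m u^T) (x *m B *m x^T) (u *m invmx B *m u^T) => a b c.
rewrite !mxE; lra.
Qed.

Lemma entry_delta (R : realType) n (D : 'M[R]_n) i j :
  ((delta_mx 0 i : 'rV[R]_n) *m D *m (delta_mx 0 j : 'rV[R]_n)^T) 0 0 = D i j.
Proof. by rewrite trmx_delta -rowE -colE !mxE. Qed.

Lemma delta_form (R : realType) n (D : 'M[R]_n) i j :
  ((delta_mx 0 i : 'rV[R]_n) *m D *m (delta_mx 0 j : 'rV[R]_n)^T) = (D i j)%:M.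
Proof. by apply/matrixP => a b; rewrite !ord1 entry_delta mxE eqxx mulr1n. Qed.

Lemma psd_tr (R : realType) n (D : 'M[R]_n) : psd D -> D != 0 -> 0 < \tr D.
Proof.
move=> [sD hD] Dn0.
have dge0 : forall i, 0 <= D i i by move=> i; rewrite -entry_delta.
rewrite lt_def; apply/andP; split; last by apply: sumr_ge0 => i _.
apply: contra Dn0 => /eqP t0.
have dii : forall i, D i i = 0.
  by move=> i; move: t0 => /psumr_eq0P -> // k _.
apply/eqP/matrixP => i j; rewrite mxE.
have Dji : D j i = D i j by rewrite -[in LHS]sD mxE.
have := hD (delta_mx 0 i - D i j *: delta_mx 0 j).
rewrite [(_ - _)^T]linearB /= [(_ *: _)^T]linearZ /=.
rewrite !mulmxBl !mulmxBr -!scalemxAl -!scalemxAr.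
rewrite !delta_form !mxE !dii Dji eqxx !mulr1n => h.
nra.
Qed.

Definition sel (R : realType) N (b : {set 'I_N}) m : 'M[R]_(m, N) :=
  \matrix_(i < m, j < N) ((onth (enum b) i == Some j)%:R).

Lemma sum_delta (R : realType) N (F : 'I_N -> R) (o : option 'I_N) :
  \sum_k (o == Some k)%:R * F k = if o is Some a then F a else 0.
Proof.
case: o => [a|]; last by rewrite big1 // => k _; rewrite mul0r.
rewrite (bigD1 a) //= eqxx mul1r big1 ?addr0 // => k ka.
by rewrite (_ : (Some a == Some k) = false) ?mul0r //; apply/negbTE; rewrite eq_sym.
Qed.

Lemma submx_sel (R : realType) N (K : 'M[R]_N) b g m n :
  submx_idx K b g m n = sel R b m *m K *m (sel R g n)^T.
Proof.
apply/matrixP => i j; rewrite !mxE.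
under eq_bigr do rewrite !mxE.
under eq_bigr do under eq_bigr do rewrite !mxE.
under eq_bigr do rewrite sum_delta mulrC.
rewrite sum_delta.
by case: (onth (enum b) i) => [a|]; case: (onth (enum g) j).
Qed.

Lemma sel_selT_E (R : realType) N (b g : {set 'I_N}) m n i j :
  (sel R b m *m (sel R g n)^T) i j =
  if onth (enum b) i is Some a then (onth (enum g) j == Some a)%:R else 0.
Proof.
rewrite !mxE; under eq_bigr do rewrite !mxE; exact: sum_delta.
Qed.

Lemma sel_id (R : realType) N (b : {set 'I_N}) m :
  m = #|b| -> sel R b m *m (sel R b m)^T = 1%:M.
Proof.
move=> hm; apply/matrixP => i j; rewrite sel_selT_E mxE.
have hs : forall k : 'I_m, (k < size (enum b))%N by move=> k; rewrite -cardE -hm.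
case hi: (onth (enum b) i) => [a|]; last by move: (hs i); rewrite -onthTE hi.
case hj: (onth (enum b) j) => [c|]; last by move: (hs j); rewrite -onthTE hj.
have <- := onth_nth a a _ _ hi; have <- := onth_nth a c _ _ hj.
rewrite (_ : (Some _ == Some _) = (nth a (enum b) j == nth a (enum b) i)) //.
by rewrite nth_uniq ?enum_uniq // eq_sym.
Qed.

Lemma sel_C0 (R : realType) N (b : {set 'I_N}) m n :
  sel R b m *m (sel R (~: b) n)^T = 0.
Proof.
apply/matrixP => i j; rewrite sel_selT_E mxE.
case hi: (onth (enum b) i) => [a|] //.
case hj: (onth (enum (~: b)) j) => [c|] //.
have ha : a \in b by rewrite -mem_enum -(onth_nth a a _ _ hi) mem_nth // -onthTE hi.
have hc : c \in ~: b by rewrite -mem_enum -(onth_nth a c _ _ hj) mem_nth // -onthTE hj.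
rewrite (_ : (Some c == Some a) = false) //; apply/negbTE; apply/eqP => -[ca].
by move: hc; rewrite ca inE ha.
Qed.

Lemma posdef_sub (R : realType) N m (K : 'M[R]_N) (E : 'M[R]_(m, N)) (F : 'M[R]_(N, m)) :
  posdef K -> E *m F = 1%:M -> K^T = K -> posdef (E *m K *m E^T).
Proof.
case=> sK hK hE _; split.
  by rewrite /sym_mx !trmx_mul trmxK sK mulmxA; reflexivity.
move=> v vn0; have : v *m E != 0.
  by apply: contra vn0 => /eqP h; rewrite -(mulmx1 v) -hE mulmxA h mul0mx.
by move/hK; rewrite !trmx_mul !mulmxA.
Qed.

Lemma quad_expand (R : realType) N m (K : 'M[R]_N) (X Z : 'M[R]_(m, N)) :
  (X - Z) *m K *m (X - Z)^T = X *m K *m X^T - X *m K *m Z^T - (Z *m K *m X^T - Z *m K *m Z^T).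
Proof. by rewrite [(_ - _)^T]linearB /= mulmxBl !mulmxBr !mulmxBl zmod4b. Qed.

Lemma schur_pd (R : realType) N m k (K : 'M[R]_N) (Ec : 'M[R]_(m, N)) (Ea : 'M[R]_(k, N)) :
  posdef K -> Ec *m Ec^T = 1%:M -> Ea *m Ea^T = 1%:M -> Ea *m Ec^T = 0 ->
  posdef (Ec *m K *m Ec^T - Ec *m K *m Ea^T *m invmx (Ea *m K *m Ea^T) *m (Ea *m K *m Ec^T)).
Proof.
move=> pK hc ha hac.
have sK : K^T = K by case: pK.
have pP := posdef_sub pK ha sK.
have uP := posdef_unit pP.
have sP : (Ea *m K *m Ea^T)^T = Ea *m K *m Ea^T by case: pP.
set P := Ea *m K *m Ea^T in pP uP sP *.
set Q := Ec *m K *m Ea^T.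
have eQ : Ea *m K *m Ec^T = Q^T by rewrite /Q !trmx_mul trmxK sK mulmxA.
rewrite eQ.
set Y := Q *m invmx P.
have eY : Y^T = invmx P *m Q^T by rewrite /Y trmx_mul trmx_inv sP.
set T := Ec - Y *m Ea.
have hT : T *m Ec^T = 1%:M by rewrite /T mulmxBl -mulmxA hac mulmx0 subr0.
have eS : T *m K *m T^T = Ec *m K *m Ec^T - Q *m invmx P *m Q^T.
  rewrite /T quad_expand.
  have e1 : Ec *m K *m (Y *m Ea)^T = Q *m invmx P *m Q^T.
    by rewrite trmx_mul eY !mulmxA.
  have e2 : Y *m Ea *m K *m Ec^T = Q *m invmx P *m Q^T.
    by rewrite -!mulmxA [Ea *m _]mulmxA eQ !mulmxA.
  have e3 : Y *m Ea *m K *m (Y *m Ea)^T = Q *m invmx P *m Q^T.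
    rewrite trmx_mul eY -!mulmxA [Ea *m (K *m _)]mulmxA [Ea *m K *m _]mulmxA.
    by rewrite -/P mulKmx.
  rewrite e1 e2 e3 subrr subr0 //.
rewrite -eS; exact: posdef_sub pK hT sK.
Qed.

Lemma schur_posdef (R : realType) N M (K : 'M[R]_N) (a : {set 'I_N}) :
  posdef K -> #|a| = M -> posdef (schur_compl M K a).
Proof.
move=> pK ha; rewrite /schur_compl !submx_sel.
apply: schur_pd => //.
- by apply: sel_id; rewrite cardsCs card_ord setCK ha.
- exact: sel_id.
- exact: sel_C0.
Qed.

Theorem mainTheorem1 (R : realType) (N M : nat) (K : 'M[R]_N)
  (alpha_star : {set 'I_N}) :
  (2 <= N)%N -> (1 <= M)%N -> (M < N)%N ->
  posdef K ->
  #|alpha_star| = M ->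
  (forall alpha : {set 'I_N}, #|alpha| = M ->
     \tr (invmx (schur_compl M K alpha))
       <= \tr (invmx (schur_compl M K alpha_star))) ->
  ~ (exists beta : {set 'I_N}, #|beta| = M /\
       loewner_lt (schur_compl M K beta) (schur_compl M K alpha_star)).
Proof.
move=> _ _ _ pK ha hmax [b [hb [hle hne]]].
have := hmax b hb.
have pA := schur_posdef pK ha; have pB := schur_posdef pK hb.
move: hle hne pA pB.
set A := schur_compl M K alpha_star; set B := schur_compl M K b.
move=> hle hne pA pB.
have sA : A^T = A by case: pA.
have sB : B^T = B by case: pB.
have pD : psd (invmx B - invmx A).
  split; first by rewrite /sym_mx linearB /= !trmx_inv sA sB.
  move=> u; rewrite mulmxBr mulmxBl.
  have := inv_anti pA pB hle u.
  move: (u *m invmx A *m u^T) (u *m invmx B *m u^T) => x y.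
  by rewrite !mxE subr_ge0.
have Dn0 : invmx B - invmx A != 0.
  rewrite subr_eq0; apply/negP => /eqP h; apply: hne.
  by rewrite -(invmxK B) h invmxK.
have := psd_tr pD Dn0; rewrite linearB /=.
move: (\tr (invmx A)) (\tr (invmx B)) => x y; lra.
Qed.
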